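(* Fix a real number $0<q<1$ and $\nu\in\mathbb{S}^1$. Order the standard orthonormal basis of $L^2(\mathbb{S}^1)$ by setting $e_{2n}:=e^{-in\theta}$ for $n\geq 0$ and $e_{2n-1}:=e^{in\theta}$ for $n\geq 1$, and put $e_{-1}:=0$. Define $\sigma_{c,\nu},\sigma_{a,\nu}:\mathbb{S}^1\times\mathbb{Z}\to\mathbb{C}$ by $\sigma_{c,\nu}(\theta,n)=q^{-2n}\nu$ for $n\leq 0$ and $\sigma_{c,\nu}(\theta,n)=q^{2n-1}\nu$ for $n\geq 1$; $\sigma_{a,\nu}(\theta,0)=0$, $\sigma_{a,\nu}(\theta,n)=\sqrt{1-q^{2(2n-1)}}\,e^{-(2n-1)i\theta}$ for $n\geq 1$, and $\sigma_{a,\nu}(\theta,n)=\sqrt{1-q^{2(-2n)}}\,e^{-2ni\theta}$ for $n\leq -1$. Let $T_{c,\nu}$ and $T_{a,\nu}$ be the periodic pseudo-differential operators $T_{\sigma}f(\theta)=\sum_{n\in\mathbb{Z}}\hat f(n)\sigma(\theta,n)e^{in\theta}$ with symbols $\sigma=\sigma_{c,\nu}$ and $\sigma=\sigma_{a,\nu}$ respectively. Then for every $k\geq 0$, $$T_{c,\nu}e_k=q^{k}\nu\, e_k,\qquad T_{a,\nu}e_k=\sqrt{1-q^{2k}}\,e_{k-1},$$ i.e. $T_{a,\nu}$ and $T_{c,\nu}$ act on the basis $(e_k)_{k\ge0}$ exactly as $\pi^\infty_\nu(a)$ and $\pi^\infty_\nu(c)$ in Woronowicz's infinite-dimensional representation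 $\pi^\infty_\nu(a)e_k=\sqrt{1-q^{2k}}e_{k-1}$, $\pi^\infty_\nu(c)e_k=q^k\nu e_k$ of $SU_q(2)$.
   Context: For $f\in L^1(\mathbb{S}^1)$, $\hat f(n)=\frac{1}{2\pi}\int_0^{2\pi}f(\theta)e^{-in\theta}\,d\theta$ denotes its $n$-th Fourier coefficient. $SU_q(2)$ is the $*$-algebra generated by $a,c$ subject to $ac^*=qc^*a$, $ca^*=qa^*c$, $c^*a^*=qa^*c^*$, $c^*c=cc^*$, $aa^*+q^2c^*c=a^*a+c^*c=1$. *)

(* Defs.v *)
From Stdlib Require Export Reals ZArith.
From Coquelicot Require Export Coquelicot.
Open Scope R_scope.

Definition expi (t : R) : C := (cos t, sin t).

(* Functions on S^1 are represented as 2pi-periodic functions R -> C. *)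
Definition fourier_coef (f : R -> C) (n : Z) : C :=
  scal (/ (2 * PI)) (RInt (V := C_R_CompleteNormedModule)
                       (fun th => Cmult (f th) (expi (- IZR n * th))) 0 (2 * PI)).

Definition sym_sum (g : Z -> C) (N : nat) : C :=
  sum_n (fun m : nat => g (Z.of_nat m - Z.of_nat N)%Z) (2 * N).

(* T_sigma f(theta) = sum_{n in Z} hat f(n) sigma(theta,n) e^{i n theta}; the
   relation says that the series (symmetric partial sums) converges to v. *)
Definition PsiDO_at (sigma : R -> Z -> C) (f : R -> C) (th : R) (v : C) : Prop :=
  filterlim (sym_sum (fun n => Cmult (Cmult (fourier_coef f n) (sigma th n)) (expi (IZR n * th))))
            eventually (locally v).

Definition ebasis (k : Z) (th : R) : C :=
  if (k <? 0)%Z then RtoC 0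
  else if Z.even k then expi (- IZR (k / 2) * th)
  else expi (IZR ((k + 1) / 2) * th).

Definition sigma_c (q : R) (nu : C) (th : R) (n : Z) : C :=
  if (n <=? 0)%Z then Cmult (RtoC (powerRZ q (-2 * n))) nu
  else Cmult (RtoC (powerRZ q (2 * n - 1))) nu.

Definition sigma_a (q : R) (nu : C) (th : R) (n : Z) : C :=
  if (n =? 0)%Z then RtoC 0
  else if (1 <=? n)%Z then
    Cmult (RtoC (sqrt (1 - powerRZ q (2 * (2 * n - 1))))) (expi (- IZR (2 * n - 1) * th))
  else
    Cmult (RtoC (sqrt (1 - powerRZ q (2 * (- 2 * n))))) (expi (- IZR (2 * n) * th)).

(* Main.v *)
Require Import Defs.
From Stdlib Require Import Lia Lra FunctionalExtensionality.

Lemma scalC r (z:C) : @scal _ C_R_CompleteNormedModule r z = Cmult (RtoC r) z.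
Proof. destruct z as [a b]. apply injective_projections; simpl;
  unfold scal; simpl; unfold mult; simpl; ring. Qed.

Lemma expi_mult a b : Cmult (expi a) (expi b) = expi (a + b).
Proof. unfold expi. rewrite cos_plus, sin_plus.
  apply injective_projections; simpl; ring. Qed.

Lemma sin_2PI_Z d : sin (IZR d * (2 * PI)) = 0.
Proof. apply sin_eq_0_1. exists (2 * d)%Z. rewrite mult_IZR. ring. Qed.

Lemma cos_2PI_Z d : cos (IZR d * (2 * PI)) = 1.
Proof. replace (IZR d * (2 * PI)) with (2 * (IZR d * PI)) by ring.
  rewrite cos_2a_sin. rewrite sin_eq_0_1 by (exists d; ring). ring. Qed.

Lemma is_RInt_expi (d : Z) : d <> 0%Z ->
  is_RInt (V := C_R_CompleteNormedModule) (fun t => expi (IZR d * t)) 0 (2 * PI) (RtoC 0).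
Proof.
  intros Hd. assert (HD : IZR d <> 0) by (apply not_0_IZR; auto).
  set (v1 := (RtoC 1)). set (v2 := ((0,1) : C)).
  pose proof (is_RInt_scal_derive (V := C_R_CompleteNormedModule)
    (fun t => sin (IZR d * t) / IZR d) (fun _ => v1) (fun t => cos (IZR d * t)) (fun _ => zero) 0 (2*PI) ltac:(intros; auto_derive; [auto| field; auto]) ltac:(intros; exact (is_derive_const (K:=R_AbsRing) (V:=C_R_CompleteNormedModule) _ _)) ltac:(intros; apply (ex_derive_continuous (K:=R_AbsRing) (V:=R_NormedModule)); auto_derive; auto) ltac:(intros; apply continuous_const)) as H1.
  pose proof (is_RInt_scal_derive (V := C_R_CompleteNormedModule)
    (fun t => - cos (IZR d * t) / IZR d) (fun _ => v2) (fun t => sin (IZR d * t)) (fun _ => zero) 0 (2*PI) ltac:(intros; auto_derive; [auto| field; auto]) ltac:(intros; exact (is_derive_const (K:=R_AbsRing) (V:=C_R_CompleteNormedModule) _ _)) ltac:(intros; apply (ex_derive_continuous (K:=R_AbsRing) (V:=R_NormedModule)); auto_derive; auto) ltac:(intros; apply continuous_const)) as H2.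
  assert (H := is_RInt_plus _ _ _ _ _ _ H1 H2).
  cbv beta in H. match type of H with is_RInt _ _ _ ?L => assert (E : L = RtoC 0) end.
  { rewrite !scalC. unfold v1, v2.
    rewrite Rmult_0_r, sin_0, cos_0.
    rewrite sin_2PI_Z, cos_2PI_Z.
    apply injective_projections; simpl; unfold plus, minus, opp; simpl; field; auto. }
  rewrite E in H.
  eapply is_RInt_ext; [|exact H].
  intros x _. cbv beta. rewrite !scalC. unfold v1, v2, expi.
  apply injective_projections; simpl; unfold plus, zero; simpl; field; auto.
Qed.

Lemma fourier_expi j n : fourier_coef (fun t => expi (IZR j * t)) n =
  if Z.eqb n j then RtoC 1 else RtoC 0.
Proof.
  unfold fourier_coef.
  rewrite (RInt_ext (V:=C_R_CompleteNormedModule) _ (fun t => expi (IZR (j - n) * t))).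
  2:{ intros x _. rewrite expi_mult. f_equal. rewrite minus_IZR. ring. }
  assert (HP : PI > 0) by exact PI_RGT_0.
  destruct (Z.eqb_spec n j) as [->|Hne].
  - rewrite Z.sub_diag. rewrite (RInt_ext (V:=C_R_CompleteNormedModule) _ (fun _ => RtoC 1)).
    2:{ intros x _. unfold expi. rewrite Rmult_0_l, cos_0, sin_0. reflexivity. }
    rewrite RInt_const. rewrite !scalC.
    apply injective_projections; simpl; field; lra.
  - rewrite (is_RInt_unique _ _ _ _ (is_RInt_expi (j - n) ltac:(lia))).
    rewrite scalC. apply injective_projections; simpl; ring.
Qed.

Lemma sum_n_zero {G : AbelianMonoid} (a : nat -> G) n :
  (forall m, (m <= n)%nat -> a m = zero) -> sum_n a n = zero.
Proof.
  induction n; intros H.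
  - rewrite sum_O. apply H. lia.
  - rewrite sum_Sn, IHn by (intros; apply H; lia). rewrite H by lia. apply plus_zero_r.
Qed.

Lemma sum_n_single {G : AbelianMonoid} (a : nat -> G) m0 n :
  (m0 <= n)%nat -> (forall m, m <> m0 -> a m = zero) -> sum_n a n = a m0.
Proof.
  induction n; intros Hle H.
  - assert (m0 = 0%nat) by lia. subst. apply sum_O.
  - rewrite sum_Sn. destruct (Nat.eq_dec m0 (S n)) as [->|Hne].
    + rewrite sum_n_zero by (intros; apply H; lia). apply plus_zero_l.
    + rewrite IHn by (auto; lia). rewrite (H (S n)) by lia. apply plus_zero_r.
Qed.

Lemma psido_single sigma j th v :
  Cmult (sigma th j) (expi (IZR j * th)) = v ->
  PsiDO_at sigma (fun t => expi (IZR j * t)) th v.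
Proof.
  intros Hv. unfold PsiDO_at.
  intros P HP. exists (Z.abs_nat j). intros N HN.
  replace (sym_sum _ N) with v. { now apply locally_singleton. }
  unfold sym_sum.
  rewrite (sum_n_single _ (Z.to_nat (j + Z.of_nat N))).
  - rewrite fourier_expi. rewrite Z2Nat.id by lia.
    replace (j + Z.of_nat N - Z.of_nat N)%Z with j by ring.
    rewrite Z.eqb_refl. rewrite <- Hv. ring.
  - lia.
  - intros m Hm. rewrite fourier_expi.
    destruct (Z.eqb_spec (Z.of_nat m - Z.of_nat N) j). { lia. }
    unfold zero; simpl. ring.
Qed.

Lemma ebasis_even x th : (0 <= x)%Z -> ebasis (2 * x) th = expi (IZR (- x) * th).
Proof.
  intros Hx. unfold ebasis.
  replace ((2 * x <? 0)%Z) with false by (symmetry; apply Z.ltb_ge; lia).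
  replace ((2*x)/2)%Z with x by (rewrite Z.mul_comm, Z.div_mul; lia).
  rewrite Z.even_mul. simpl. rewrite opp_IZR. reflexivity.
Qed.

Lemma ebasis_odd x th : (0 <= x)%Z -> ebasis (2 * x + 1) th = expi (IZR (x + 1) * th).
Proof.
  intros Hx. unfold ebasis.
  replace ((2 * x + 1 <? 0)%Z) with false by (symmetry; apply Z.ltb_ge; lia).
  replace ((2 * x + 1 + 1)/2)%Z with (x + 1)%Z by
    (replace (2 * x + 1 + 1)%Z with ((x + 1) * 2)%Z by ring; rewrite Z.div_mul; lia).
  rewrite Z.even_add, Z.even_mul. simpl. reflexivity.
Qed.

Lemma ebasis_m1 th : ebasis (-1) th = RtoC 0.
Proof. reflexivity. Qed.

Lemma powerRZ_pow q n : powerRZ q (Z.of_nat n) = q ^ n.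
Proof. symmetry; apply pow_powerRZ. Qed.

Ltac zsimp := repeat (rewrite ?opp_IZR, ?plus_IZR, ?minus_IZR, ?mult_IZR); ring.

Theorem mainTheorem1 (q : R) (nu : C) (hq0 : 0 < q) (hq1 : q < 1)
  (hnu : Cmod nu = 1) :
  forall (k : nat) (th : R),
    PsiDO_at (sigma_c q nu) (ebasis (Z.of_nat k)) th
      (Cmult (Cmult (RtoC (q ^ k)) nu) (ebasis (Z.of_nat k) th)) /\
    PsiDO_at (sigma_a q nu) (ebasis (Z.of_nat k)) th
      (Cmult (RtoC (sqrt (1 - q ^ (2 * k)))) (ebasis (Z.of_nat k - 1) th)).
Proof.
  intros k th.
  destruct (Nat.Even_or_Odd k) as [[m Hm]|[m Hm]]; subst k.
  - set (x := Z.of_nat m).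
    assert (Hx : (0 <= x)%Z) by (unfold x; lia).
    assert (Ek : Z.of_nat (2 * m) = (2 * x)%Z) by (unfold x; lia).
    rewrite Ek.
    replace (ebasis (2 * x)) with (fun t => expi (IZR (- x) * t))
      by (apply functional_extensionality; intros t; rewrite ebasis_even; auto).
    cbv beta. split.
    + apply psido_single. unfold sigma_c.
      destruct (Z.leb_spec (- x) 0); [|lia].
      replace (-2 * - x)%Z with (Z.of_nat (2 * m)) by (unfold x; lia).
      rewrite powerRZ_pow. ring.
    + apply psido_single. unfold sigma_a.
      destruct (Z.eqb_spec (- x) 0) as [H0|H0].
      * assert (m = 0%nat) by lia. subst m. simpl.
        replace (1 - 1) with 0 by ring. rewrite sqrt_0. ring.
      * destruct (Z.leb_spec 1 (- x)); [lia|].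
        replace (2 * (-2 * - x))%Z with (Z.of_nat (2 * (2 * m))) by (unfold x; lia).
        rewrite powerRZ_pow.
        replace (2 * x - 1)%Z with (2 * (x - 1) + 1)%Z by ring.
        rewrite ebasis_odd by lia.
        rewrite <- Cmult_assoc, expi_mult. f_equal. f_equal. zsimp.
  - set (x := Z.of_nat m).
    assert (Hx : (0 <= x)%Z) by (unfold x; lia).
    assert (Ek : Z.of_nat (2 * m + 1) = (2 * x + 1)%Z) by (unfold x; lia).
    rewrite Ek.
    replace (ebasis (2 * x + 1)) with (fun t => expi (IZR (x + 1) * t))
      by (apply functional_extensionality; intros t; rewrite ebasis_odd; auto).
    cbv beta. split.
    + apply psido_single. unfold sigma_c.
      destruct (Z.leb_spec (x + 1) 0); [lia|].
      replace (2 * (x + 1) - 1)%Z with (Z.of_nat (2 * m + 1)) by (unfold x; lia).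
      rewrite powerRZ_pow. ring.
    + apply psido_single. unfold sigma_a.
      destruct (Z.eqb_spec (x + 1) 0) as [H0|H0]; [lia|].
      destruct (Z.leb_spec 1 (x + 1)); [|lia].
      replace (2 * (2 * (x + 1) - 1))%Z with (Z.of_nat (2 * (2 * m + 1))) by (unfold x; lia).
      rewrite powerRZ_pow.
      replace (2 * x + 1 - 1)%Z with (2 * x)%Z by ring.
      rewrite ebasis_even by lia.
      rewrite <- Cmult_assoc, expi_mult. f_equal. f_equal. zsimp.
Qed.
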